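(* Let $p\ge 1$ be an integer and for each $i\in\{0,\dots,p\}$ let $S_i$ be a $\Delta_i$-star with $\Delta_i\ge 3$. Let $G_0=S_0$ and for $i\in\{1,\dots,p\}$ let $G_i = G_{i-1}\rhd_{v_{i-1}} S_i$, where $v_{i-1}$ is a vertex of $G_{i-1}$. Let $G=G_p$ have order $n$ and maximum degree $\Delta$, and let $\Delta_{\max}=\max\{\Delta_i: 0\le i\le p\}$. Then \[\gamma^{\rm ID}(G)\le \left(\frac{\Delta_{\max}-1}{\Delta_{\max}}\right)n + \frac{1}{\Delta_0} \le \left(\frac{\Delta-1}{\Delta}\right)n + \frac13.\]
   Context: An identifying code of a graph $G$ is a set $C\subseteq V(G)$ such that every vertex $v$ has $N[v]\cap C\neq\emptyset$ and for all distinct $u,v$, $N[u]\cap C \ne N[v]\cap C$, where $N[v]$ is the closed neighborhood; $\gamma^{\rm ID}(G)$ is its minimum size. A $k$-star is $K_{1,k}$. For a graph $G'$, a vertex $v$ of $G'$ and a star $S$, $G'\rhd_v S$ is the graph obtained from the disjoint union of $G'$ and $S$ by identifying $v$ with a leaf of $S$. *)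

(* Defs.v *)
From mathcomp Require Import all_boot all_order all_algebra.
Set Implicit Arguments. Unset Strict Implicit. Unset Printing Implicit Defensive.

(* A finite simple graph is given by its number of vertices n (vertex set
   {0,...,n-1}) and a symmetric, irreflexive adjacency relation on nat
   (only its restriction to vertices < n matters). *)
Definition graph := (nat * rel nat)%type.

Definition star_graph (d : nat) : graph :=
  (d.+1, fun x y => [&& x < d.+1, y < d.+1 &
                     ((x == 0) && (y != 0)) || ((y == 0) && (x != 0))]).

(* G |>_v S with S a d-star: a fresh centre c := n is added, adjacent to v
   (the leaf identified with v) and to d-1 fresh leaves n+1, ..., n+d-1. *)
Definition star_edge (n v d : nat) (x y : nat) : bool :=
  (x == n) && ((y == v) || ((n < y) && (y < n + d))).

Definition attach_star (G : graph) (v d : nat) : graph :=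
  (G.1 + d, fun x y => [|| G.2 x y, star_edge G.1 v d x y | star_edge G.1 v d y x]).

Fixpoint star_chain (Ds vs : nat -> nat) (i : nat) : graph :=
  match i with
  | 0 => star_graph (Ds 0)
  | i'.+1 => attach_star (star_chain Ds vs i') (vs i') (Ds i)
  end.

Section GraphParams.
Variable G : graph.

Definition V := 'I_G.1.

Definition cnbhd (v : V) : {set V} := [set u : V | (u == v) || G.2 v u].

Definition is_idcode (C : {set V}) : bool :=
  [forall v : V, cnbhd v :&: C != set0] &&
  [forall u : V, forall v : V, (u != v) ==> (cnbhd u :&: C != cnbhd v :&: C)].

(* gamma^ID(G): minimum size of an identifying code; if none exists we
   return n+1 (a value exceeding every possible code size, standing for +oo). *)
Definition gammaID : nat :=
  \big[minn/G.1.+1]_(C : {set V} | is_idcode C) #|C|.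

Definition degree (v : V) : nat := #|[set u : V | G.2 v u]|.

Definition max_degree : nat := \max_(v : V) degree v.

End GraphParams.

(* Main.v *)
Require Import Defs.
From mathcomp Require Import all_boot all_order all_algebra.
From mathcomp Require Import zify ring lra.
Import Order.TTheory GRing.Theory Num.Theory.

Definition confined (G : graph) := forall x y, G.2 x y -> (x < G.1) && (y < G.1).
Definition domc (G : graph) (c : pred nat) :=
  forall x, x < G.1 -> exists u, [&& u < G.1, c u & (u == x) || G.2 x u].
Definition sepc (G : graph) (c : pred nat) :=
  forall x y, x < G.1 -> y < G.1 -> x != y ->
  exists w, [&& w < G.1, c w & ((w == x) || G.2 x w) != ((w == y) || G.2 y w)].

Lemma conf_false (G : graph) x y : confined G -> ~~ ((x < G.1) && (y < G.1)) -> G.2 x y = false.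
Proof. move=> H h; apply/negP => /H; by rewrite (negbTE h). Qed.

Lemma star_ok D : 3 <= D ->
  [/\ confined (star_graph D), domc (star_graph D) (fun x => x != 0)
    & sepc (star_graph D) (fun x => x != 0)].
Proof.
move=> hD; split.
- by move=> x y /= /and3P [-> -> _].
- move=> x /= hx; case: (eqVneq x 0) => [->|h0].
  + exists 1; rewrite /=; lia.
  + exists x; rewrite /=; lia.
- move=> x y /= hx hy hxy.
  case: (eqVneq x 0) => [hx0|hx0].
  + exists (if y == 1 then 2 else 1); case: (eqVneq y 1) => hy1 /=; lia.
  case: (eqVneq y 0) => [hy0|hy0].
  + exists (if x == 1 then 2 else 1); case: (eqVneq x 1) => hx1 /=; lia.
  exists x => /=; lia.
Qed.

Lemma step_ok (G : graph) (c : pred nat) v D : v < G.1 -> 3 <= D ->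
  confined G -> domc G c -> sepc G c ->
  let c' := fun x => if x < G.1 then c x else x != G.1 in
  [/\ confined (attach_star G v D), domc (attach_star G v D) c'
    & sepc (attach_star G v D) c'].
Proof.
move=> hv hD hc hd hs c'; split.
- move=> x y /= /orP [/hc|]; first lia.
  rewrite /star_edge; lia.
- move=> x /= hx; case: (ltnP x G.1) => hxn.
  + have [u] := hd x hxn; case/and3P => hu cu e.
    exists u; rewrite /c' hu /= /star_edge; move: e cu; lia.
  + case: (eqVneq x G.1) => [->|hxn'].
    * exists G.1.+1; rewrite /c' /= /star_edge ltnn.
      have -> : (G.1.+1 < G.1) = false by lia.
      lia.
    * exists x; rewrite /c' /=.
      have -> : (x < G.1) = false by lia.
      lia.
- rewrite /=.
  suff H : forall x y, x < y -> y < G.1 + D ->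
    exists w, [&& w < G.1 + D, c' w & ((w == x) || (attach_star G v D).2 x w)
                 != ((w == y) || (attach_star G v D).2 y w)].
  + move=> x y hx hy hxy; case: (ltngtP x y) hxy => // hlt _.
    * exact: H.
    * have [w] := H y x hlt hx; case/and3P => h1 h2 h3.
      by exists w; rewrite h1 h2 eq_sym h3.
  move=> x y hxy hy.
  case: (ltnP y G.1) => hyn.
  + have [w] := hs x y (ltn_trans hxy hyn) hyn (negbT (ltn_eqF hxy)); case/and3P => hw cw e.
    exists w; rewrite /c' hw cw /= /star_edge.
    have -> : (w < G.1 + D) by lia.
    have -> : (x == G.1) = false by lia.
    have -> : (y == G.1) = false by lia.
    have -> : (w == G.1) = false by lia.
    by rewrite /= !orbF.
  case: (ltnP x G.1) => hxn.
  + case: (eqVneq y G.1) => [hyE|hyE].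
    * exists G.1.+1; rewrite /c' /= /star_edge.
      have -> : (G.1.+1 < G.1) = false by lia.
      rewrite (@conf_false G x G.1.+1 hc) ?(@conf_false G y G.1.+1 hc); lia.
    * exists y; rewrite /c' /= /star_edge.
      have -> : (y < G.1) = false by lia.
      rewrite (@conf_false G x y hc) ?(@conf_false G y y hc); lia.
  + case: (eqVneq x G.1) => [hxE|hxE].
    * exists (if y == G.1.+1 then G.1.+2 else G.1.+1).
      rewrite /c' /= /star_edge.
      case: (eqVneq y G.1.+1) => hy1 /=.
      - have -> : (G.1.+2 < G.1) = false by lia.
        rewrite (@conf_false G x G.1.+2 hc) ?(@conf_false G y G.1.+2 hc); lia.
      - have -> : (G.1.+1 < G.1) = false by lia.
        rewrite (@conf_false G x G.1.+1 hc) ?(@conf_false G y G.1.+1 hc); lia.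
    * exists y; rewrite /c' /= /star_edge.
      have -> : (y < G.1) = false by lia.
      rewrite (@conf_false G x y hc) ?(@conf_false G y y hc); lia.
Qed.

Lemma card_pred n (P : pred nat) : #|[set x : 'I_n | P x]| = count P (iota 0 n).
Proof.
rewrite cardE /enum_mem -enumT size_filter -val_enum_ord count_map.
by apply: eq_count => x; rewrite /= inE.
Qed.

Lemma gamma_le (G : graph) (C : {set V G}) : is_idcode C -> gammaID G <= #|C|.
Proof.
move=> hC; rewrite /gammaID.
have : C \in index_enum {set V G} by rewrite mem_index_enum.
elim: (index_enum _) => [//|a r IH]; rewrite inE big_cons.
case: (eqVneq C a) => [<- _|_ /= /IH h]; first by rewrite hC geq_minl.
case: ifP => // _; exact: leq_trans (geq_minr _ _) h.
Qed.

Lemma idcode_of (G : graph) (c : pred nat) :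
  domc G c -> sepc G c -> is_idcode [set x : V G | c x].
Proof.
move=> hd hs; apply/andP; split.
- apply/forallP => v; have [u] := hd v (ltn_ord v); case/and3P => hu cu e.
  apply/set0Pn; exists (Ordinal hu); rewrite !inE /= cu andbT; exact: e.
- apply/forallP => u; apply/forallP => v; apply/implyP => huv.
  have [w] := hs u v (ltn_ord u) (ltn_ord v) huv; case/and3P => hw cw e.
  apply/negP => /eqP E.
  have := congr1 (fun S : {set V G} => (Ordinal hw : V G) \in S) E; rewrite /= !inE cw !andbT.
  by move=> E'; move: e; rewrite /= E' eqxx.
Qed.

Fixpoint cd (Ds vs : nat -> nat) (i : nat) : pred nat :=
  match i with
  | 0 => fun x => x != 0
  | i'.+1 => fun x => if x < (star_chain Ds vs i').1 then cd Ds vs i' x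
                      else x != (star_chain Ds vs i').1
  end.

Lemma chain_ok Ds vs p :
  (forall i, (i <= p)%N -> (3 <= Ds i)%N) ->
  (forall i, (i < p)%N -> (vs i < (star_chain Ds vs i).1)%N) ->
  forall i, i <= p -> [/\ confined (star_chain Ds vs i),
     domc (star_chain Ds vs i) (cd Ds vs i) & sepc (star_chain Ds vs i) (cd Ds vs i)].
Proof.
move=> hD hv; elim => [_|i IH hi]; first exact: star_ok (hD 0 isT).
have [h1 h2 h3] := IH (ltnW hi).
exact: step_ok (hv i hi) (hD i.+1 hi) h1 h2 h3.
Qed.

Lemma count_all (P : pred nat) a k : (forall x, a <= x < a + k -> P x) ->
  count P (iota a k) = k.
Proof.
move=> h; rewrite (eq_in_count (a2 := predT)) ?count_predT ?size_iota //.
by move=> x; rewrite mem_iota => /h ->.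
Qed.

Lemma count_iota_le (P : pred nat) a k b m : b <= a -> a + k <= b + m ->
  count P (iota a k) <= count P (iota b m).
Proof.
move=> h1 h2; have -> : m = (a - b) + (k + (b + m - (a + k))) by lia.
rewrite !iotaD !count_cat; have -> : b + (a - b) = a by lia.
lia.
Qed.

Lemma count_cd Ds vs p :
  (forall i, (i <= p)%N -> (3 <= Ds i)%N) ->
  forall i, i <= p -> count (cd Ds vs i) (iota 0 (star_chain Ds vs i).1)
                      = (star_chain Ds vs i).1 - i.+1 /\ i.+1 <= (star_chain Ds vs i).1.
Proof.
move=> hD; elim => [_|i IH hi].
- have h0 := hD 0 isT; rewrite /= add0n.
  rewrite (count_all _ 1); last by move=> x; lia.
  lia.
- have [c1 c2] := IH (ltnW hi); have h0 := hD i.+1 hi.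
  rewrite /= iotaD count_cat.
  rewrite (eq_in_count (a2 := cd Ds vs i)); last by move=> x; rewrite mem_iota /= => ->.
  rewrite c1 add0n.
  have -> : Ds i.+1 = (Ds i.+1).-1.+1 by lia.
  rewrite /= ltnn eqxx /= (count_all _ (star_chain Ds vs i).1.+1); last first.
    move=> x hx /=; have -> : (x < (star_chain Ds vs i).1) = false by lia.
    lia.
  lia.
Qed.

Lemma edge_mono Ds vs i j x y : i <= j ->
  (star_chain Ds vs i).2 x y -> (star_chain Ds vs j).2 x y.
Proof.
elim: j => [|j IH]; first by rewrite leqn0 => /eqP ->.
rewrite leq_eqVlt => /orP [/eqP -> //|/IH h /h] /=.
by move=> ->.
Qed.

Lemma N_mono Ds vs i j : i <= j -> (star_chain Ds vs i).1 <= (star_chain Ds vs j).1.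
Proof.
elim: j => [|j IH]; first by rewrite leqn0 => /eqP ->.
rewrite leq_eqVlt => /orP [/eqP -> //|/IH h] /=; lia.
Qed.

Lemma degree_count (G : graph) (v : V G) : degree v = count (G.2 v) (iota 0 G.1).
Proof. by rewrite /degree card_pred. Qed.

Lemma deg_ge Ds vs p :
  (forall i, (i <= p)%N -> (3 <= Ds i)%N) ->
  (forall i, (i < p)%N -> (vs i < (star_chain Ds vs i).1)%N) ->
  forall i, i <= p -> Ds i <= max_degree (star_chain Ds vs p).
Proof.
move=> hD hv [|i] hi.
- have h0 := hD 0 isT.
  have hn := @N_mono Ds vs 0 p (leq0n p).
  have hc : 0 < (star_chain Ds vs p).1 by move: hn => /=; lia.
  apply: leq_trans (leq_bigmax (Ordinal hc)); rewrite degree_count /=.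
  have hn' : 1 + Ds 0 <= 0 + (star_chain Ds vs p).1 by move: hn => /=; lia.
  apply: leq_trans (count_iota_le _ 1 (Ds 0) 0 _ isT hn').
  rewrite (count_all _ 1) // => x hx.
  apply: (@edge_mono Ds vs 0) => //=; lia.
- have h0 := hD i.+1 hi; have hvi := hv i hi.
  have hn := @N_mono Ds vs i.+1 p hi; move: hn => /= hn.
  set m := (star_chain Ds vs i).1 in hn hvi *.
  set n := (star_chain Ds vs p).1 in hn *.
  have hc : m < n by lia.
  apply: leq_trans (leq_bigmax (Ordinal hc)); rewrite degree_count /=.
  have -> : (star_chain Ds vs p).1 = m + (n - m) by rewrite /n; lia.
  rewrite iotaD count_cat add0n.
  have e1 : 0 < count ((star_chain Ds vs p).2 m) (iota 0 m).
    rewrite -has_count; apply/hasP; exists (vs i); first by rewrite mem_iota.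
    apply: (@edge_mono Ds vs i.+1) => //=; rewrite /star_edge; lia.
  have e2 : (Ds i.+1).-1 <= count ((star_chain Ds vs p).2 m) (iota m (n - m)).
    have hh1 : m <= m.+1 by [].
    have hh2 : m.+1 + (Ds i.+1).-1 <= m + (n - m) by lia.
    apply: leq_trans (count_iota_le _ _ _ _ _ hh1 hh2).
    rewrite (count_all _ m.+1) // => x hx.
    apply: (@edge_mono Ds vs i.+1) => //=; rewrite /star_edge; lia.
  lia.
Qed.

Lemma N_bound Ds vs p M : (forall i, i <= p -> Ds i <= M) ->
  forall i, i <= p -> (star_chain Ds vs i).1 <= Ds 0 + 1 + i * M.
Proof.
move=> h; elim => [_|i IH hi] /=; first lia.
have := IH (ltnW hi); have := h i.+1 hi; lia.
Qed.

Lemma arith k p d D0 : (k + p.+1) * D0 <= p.+1 * d.+1 * D0 + d.+1 ->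
  k * d.+1 * D0 <= (d.+1 - 1) * (k + p.+1) * D0 + d.+1.
Proof. rewrite subn1 /=; nia. Qed.

Theorem mainTheorem5 (p : nat) (Ds vs : nat -> nat) :
  (1 <= p)%N ->
  (forall i, (i <= p)%N -> (3 <= Ds i)%N) ->
  (forall i, (i < p)%N -> (vs i < (star_chain Ds vs i).1)%N) ->
  let G := star_chain Ds vs p in
  let n := G.1 in
  let Delta := max_degree G in
  let Dmax := (\max_(i < p.+1) Ds i)%N in
  ((gammaID G)%:R <= ((Dmax%:R - 1) / Dmax%:R) * n%:R + 1 / (Ds 0%N)%:R :> rat)%R /\
  (((Dmax%:R - 1) / Dmax%:R) * n%:R + 1 / (Ds 0%N)%:R
     <= ((Delta%:R - 1) / Delta%:R) * n%:R + 1 / 3%:R :> rat)%R.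
Proof.
move=> hp hD hv G n Delta Dmax.
have [h1 h2 h3] := chain_ok Ds vs p hD hv p (leqnn p).
have hg := @gamma_le _ _ (@idcode_of _ _ h2 h3); rewrite card_pred in hg.
have [c1 c2] := count_cd Ds vs p hD p (leqnn p).
rewrite c1 -/G -/n in hg c2.
have hDm : forall i, i <= p -> Ds i <= Dmax.
  move=> i hi; have hi' : i < p.+1 by [].
  exact: (@leq_bigmax _ (fun j : 'I_p.+1 => Ds j) (Ordinal hi')).
have hNb := N_bound Ds vs p Dmax hDm p (leqnn p); rewrite -/G -/n in hNb.
have hDe : Dmax <= Delta.
  apply/bigmax_leqP => i _; exact: deg_ge Ds vs p hD hv i (ltn_ord i).
have hD0 := hD 0 isT; have hD0m := hDm 0 isT.
set g := gammaID G in hg *.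
have key : g * Dmax * Ds 0 <= (Dmax - 1) * n * Ds 0 + Dmax.
  have a1 : g * Dmax * Ds 0 <= (n - p.+1) * Dmax * Ds 0 by rewrite !leq_mul2r hg !orbT.
  apply: leq_trans a1 _.
  have b1 : n * Ds 0 <= (Ds 0 + 1 + p * Dmax) * Ds 0 by rewrite leq_mul2r hNb orbT.
  have b2 : (Ds 0 + 1) * Ds 0 <= Dmax * Ds 0 + Dmax.
    rewrite mulnDl mul1n leq_add // leq_mul2r hD0m orbT //.
  have b3 : n * Ds 0 <= p.+1 * Dmax * Ds 0 + Dmax by nia.
  have [k hk] : exists k, n = k + p.+1 by exists (n - p.+1); lia.
  have hd : Dmax = Dmax.-1.+1 by lia.
  move: b3; rewrite hk addnK hd; exact: arith.
have Dmpos : (0 < Dmax%:R :> rat)%R by rewrite ltr0n; lia.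
have D0pos : (0 < (Ds 0%N)%:R :> rat)%R by rewrite ltr0n; lia.
have Depos : (0 < Delta%:R :> rat)%R by rewrite ltr0n; lia.
split.
- have -> : ((Dmax%:R - 1) / Dmax%:R * n%:R + 1 / (Ds 0%N)%:R :> rat)%R
      = (((Dmax - 1) * n * Ds 0 + Dmax)%N%:R / (Dmax * Ds 0)%N%:R)%R.
    rewrite natrD !natrM natrB; last lia.
    field; apply/andP; split; rewrite gt_eqF //.
  rewrite ler_pdivlMr; last by rewrite ltr0n; lia.
  by rewrite -natrM ler_nat mulnA.
- have hDmDe : (Dmax%:R <= Delta%:R :> rat)%R by rewrite ler_nat.
  have h30 : (3%:R <= (Ds 0%N)%:R :> rat)%R by rewrite ler_nat.
  have hn0 : (0 <= n%:R :> rat)%R by rewrite ler0n.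
  apply: lerD.
  + apply: ler_wpM2r => //.
    rewrite ler_pdivrMr // mulrAC ler_pdivlMr //; nra.
  + rewrite ler_pdivrMr // mulrAC ler_pdivlMr ?ltr0n //; nra.
Qed.
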